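(* Let $\theta\in(\pi,2\pi)$. Then for all $x,y\in S_\theta$, $s_{S_\theta}(x,y)\le 2\sin(\theta/4)\, j^*_{S_\theta}(x,y)$, and the constant $2\sin(\theta/4)$ is sharp.
   Context: $S_\theta=\{x\in\mathbb{C}:0<\arg(x)<\theta\}$. For a domain $G\subsetneq\mathbb{C}$, $d_G(x)=\inf\{|x-z|:z\in\partial G\}$, $s_G(x,y)=\frac{|x-y|}{\inf_{z\in\partial G}(|x-z|+|z-y|)}$, and $j^*_G(x,y)=\frac{|x-y|}{|x-y|+2\min\{d_G(x),d_G(y)\}}$. *)

(* Defs.v *)
From Stdlib Require Import Reals.
From Coquelicot Require Import Coquelicot.
Open Scope R_scope.

(* S_theta = { x in C : 0 < arg x < theta }, with arg taking values in [0, 2*pi):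
   x = r e^{it} with r > 0 and 0 < t < theta. *)
Definition sector (theta : R) (x : C) : Prop :=
  exists r t : R, 0 < r /\ 0 < t < theta /\ x = (r * cos t, r * sin t)%R.

Definition boundary (G : C -> Prop) (z : C) : Prop :=
  forall e : R, 0 < e ->
    (exists w, G w /\ Cmod (z - w) < e) /\ (exists w, ~ G w /\ Cmod (z - w) < e).

Definition dG (G : C -> Prop) (x : C) : R :=
  real (Glb_Rbar (fun r => exists z, boundary G z /\ r = Cmod (x - z))).

Definition sG (G : C -> Prop) (x y : C) : R :=
  Cmod (x - y) /
  real (Glb_Rbar (fun r => exists z, boundary G z /\ r = Cmod (x - z) + Cmod (z - y))).

Definition jstar (G : C -> Prop) (x y : C) : R :=
  Cmod (x - y) / (Cmod (x - y) + 2 * Rmin (dG G x) (dG G y)).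

(* Main.v *)
Require Import Defs.
From Stdlib Require Import Reals.
From Coquelicot Require Import Coquelicot.
From Stdlib Require Import Lra Psatz Classical_Prop.
Open Scope R_scope.


Definition Lf (th : R) (p : C) : R := sin th * fst p - cos th * snd p.
Definition Gl (th : R) (p : C) : Prop := 0 < snd p \/ 0 < Lf th p.
Definition Cl (th : R) (p : C) : Prop := snd p <= 0 /\ Lf th p <= 0.

Lemma Cmod_sub (a b : C) :
  Cmod (a - b) = sqrt ((fst a - fst b)^2 + (snd a - snd b)^2).
Proof. destruct a as [a1 a2], b as [b1 b2]. unfold Cmod, Cminus, Cplus, Copp; simpl. f_equal; ring. Qed.

Lemma sqrt_ge_abs (a X : R) : a^2 <= X -> Rabs a <= sqrt X.
Proof. intros H. rewrite <- sqrt_Rsqr_abs. apply sqrt_le_1_alt. unfold Rsqr. nra. Qed.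

Lemma sqrt_le_of_sq (X u : R) : 0 <= u -> X <= u^2 -> sqrt X <= u.
Proof. intros Hu H. rewrite <- (sqrt_pow2 u Hu). apply sqrt_le_1_alt. exact H. Qed.

Lemma sqrt_eq_of_sq (X u : R) : 0 <= u -> X = u^2 -> sqrt X = u.
Proof. intros Hu H. subst. apply sqrt_pow2. exact Hu. Qed.

Lemma sqrt_sq_ge (X u : R) : 0 <= X -> u^2 <= X -> u <= sqrt X.
Proof. intros HX H. destruct (Rle_lt_dec u 0). { pose proof (sqrt_pos X). lra. }
  rewrite <- (sqrt_pow2 u) by lra. apply sqrt_le_1_alt. exact H. Qed.

Lemma Cmod_nonneg (p : C) : 0 <= Cmod p.
Proof. unfold Cmod. apply sqrt_pos. Qed.

Lemma Cmod_sq (p : C) : (Cmod p)^2 = fst p ^2 + snd p ^2.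
Proof. unfold Cmod. pose proof (pow2_ge_0 (fst p)); pose proof (pow2_ge_0 (snd p)); rewrite pow2_sqrt; lra. Qed.

Lemma Cmod_sub_sq (a b : C) : (Cmod (a - b))^2 = (fst a - fst b)^2 + (snd a - snd b)^2.
Proof. rewrite Cmod_sub. pose proof (pow2_ge_0 (fst a - fst b)); pose proof (pow2_ge_0 (snd a - snd b)); rewrite pow2_sqrt; lra. Qed.

Lemma sector_Gl (th : R) (x : C) : PI < th < 2*PI -> sector th x -> Gl th x.
Proof.
  intros Hth [r [t [Hr [Ht ->]]]]. unfold Gl, Lf; simpl.
  destruct (Rlt_le_dec t PI).
  - left. apply Rmult_lt_0_compat; [lra|]. apply sin_gt_0; lra.
  - right. replace (sin th * (r * cos t) - cos th * (r * sin t)) with (r * sin (th - t))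
      by (rewrite sin_minus; ring).
    apply Rmult_lt_0_compat; [lra|]. apply sin_gt_0; lra.
Qed.

Lemma Gl_sector (th : R) (x : C) : PI < th < 2*PI -> Gl th x -> sector th x.
Proof.
  intros Hth HG. destruct x as [x1 x2]. unfold Gl, Lf in HG; simpl in HG.
  set (r := sqrt (x1^2 + x2^2)).
  assert (Hr : 0 < r).
  { unfold r. apply sqrt_lt_R0. destruct HG as [HG|HG].
    - nra.
    - destruct (Req_dec x2 0). + subst. assert (x1 <> 0) by (intro; subst; lra). nra. + nra. }
  assert (Hr2 : r^2 = x1^2 + x2^2) by (unfold r; rewrite pow2_sqrt; [reflexivity|nra]).
  set (c := x1 / r).
  assert (Hc : -1 <= c <= 1).
  { unfold c. assert (x1^2 <= r^2) by nra.
    split.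
    - apply (Rmult_le_reg_r r); [lra|]. field_simplify; [|lra]. nra.
    - apply (Rmult_le_reg_r r); [lra|]. field_simplify; [|lra]. nra. }
  assert (Hx1 : x1 = r * c) by (unfold c; field; lra).
  assert (Hs : sqrt (1 - c²) = Rabs x2 / r).
  { apply sqrt_eq_of_sq. { apply Rmult_le_pos; [apply Rabs_pos| left; apply Rinv_0_lt_compat; lra]. }
    unfold Rsqr. unfold Rdiv. rewrite Rpow_mult_distr.
    rewrite pow2_abs. unfold c. replace (x2^2) with (r^2 - x1^2) by lra. field. lra. }
  pose proof (acos_bound c) as Hab.
  destruct (Rlt_le_dec 0 x2) as [Hx2|Hx2].
  - exists r, (acos c). split; [exact Hr|]. split.
    + split.
      * destruct (Req_dec (acos c) 0) as [E|E]; [|lra].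
        exfalso. pose proof (sin_acos c Hc) as S. rewrite E, sin_0, Hs in S.
        rewrite Rabs_right in S by lra. 
        assert (x2 = 0) by (apply (Rmult_eq_reg_r (/ r)); [lra| apply Rinv_neq_0_compat; lra]). lra.
      * lra.
    + f_equal.
      * rewrite cos_acos by exact Hc. exact Hx1.
      * rewrite sin_acos by exact Hc. rewrite Hs, Rabs_right by lra. field. lra.
  - destruct HG as [HG|HG]; [lra|].
    exists r, (2*PI - acos c). split; [exact Hr|].
    assert (Hcos : cos (2*PI - acos c) = c).
    { rewrite cos_minus, cos_2PI, sin_2PI, cos_acos by exact Hc. ring. }
    assert (Hsin : sin (2*PI - acos c) = x2 / r).
    { rewrite sin_minus, cos_2PI, sin_2PI, sin_acos by exact Hc. rewrite Hs.
      rewrite Rabs_left1 by lra. field. lra. }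
    split.
    + split; [lra|].
      destruct (Rlt_le_dec (2*PI - acos c) th) as [Hlt|Hge]; [exact Hlt|].
      exfalso.
      assert (Hneg : sin (th - (2*PI - acos c)) <= 0).
      { replace (th - (2*PI - acos c)) with (- ((2*PI - acos c) - th)) by ring.
        rewrite sin_neg. assert (0 <= sin ((2*PI - acos c) - th)) by (apply sin_ge_0; lra). lra. }
      rewrite sin_minus, Hcos, Hsin in Hneg.
      assert (sin th * x1 - cos th * x2 = r * (sin th * c - cos th * (x2 / r))) by (rewrite Hx1; field; lra).
      assert (0 <= r * - (sin th * c - cos th * (x2 / r))) by (apply Rmult_le_pos; lra). nra.
    + rewrite Hcos, Hsin. f_equal; [exact Hx1| field; lra].
Qed.

Lemma not_Gl_Cl th p : ~ Gl th p -> Cl th p.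
Proof. unfold Gl, Cl. intros H. split; apply Rnot_lt_le; intro; apply H; auto. Qed.

Lemma Cl_not_Gl th p : Cl th p -> ~ Gl th p.
Proof. unfold Gl, Cl. lra. Qed.

Lemma Lf_diff th (z w : C) : Rabs (Lf th z - Lf th w) <= Cmod (z - w).
Proof.
  rewrite Cmod_sub. apply sqrt_ge_abs. unfold Lf.
  pose proof (sin2_cos2 th) as H. unfold Rsqr in H.
  set (u := fst z - fst w). set (v := snd z - snd w).
  replace (sin th * fst z - cos th * snd z - (sin th * fst w - cos th * snd w)) with (sin th * u - cos th * v) by (unfold u, v; ring).
  assert (E : (u^2 + v^2) - (sin th * u - cos th * v)^2 = (sin th * v + cos th * u)^2).
  { replace (u^2 + v^2) with ((u^2+v^2) * (sin th * sin th + cos th * cos th)) by (rewrite H; ring). ring. }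
  pose proof (pow2_ge_0 (sin th * v + cos th * u)). unfold u, v in *. lra.
Qed.

Lemma snd_diff (z w : C) : Rabs (snd z - snd w) <= Cmod (z - w).
Proof. rewrite Cmod_sub. apply sqrt_ge_abs. pose proof (pow2_ge_0 (fst z - fst w)). lra. Qed.

Lemma bd_Cl th z : PI < th < 2*PI -> boundary (sector th) z -> Cl th z.
Proof.
  intros Hth Hb. apply not_Gl_Cl. intros [H|H].
  - destruct (Hb (snd z) H) as [_ [w [Hw Hd]]]. apply Hw. apply Gl_sector; [exact Hth|].
    left. pose proof (snd_diff z w). apply Rabs_def2 in H0 as [? ?] || idtac.
    pose proof (Rle_abs (snd z - snd w)). lra.
  - destruct (Hb (Lf th z) H) as [_ [w [Hw Hd]]]. apply Hw. apply Gl_sector; [exact Hth|].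
    right. pose proof (Lf_diff th z w). pose proof (Rle_abs (Lf th z - Lf th w)). lra.
Qed.

Lemma Cl_bd th z : PI < th < 2*PI -> Cl th z -> (snd z = 0 \/ Lf th z = 0) -> boundary (sector th) z.
Proof.
  intros Hth Hc Heq e He. split.
  - destruct Heq as [H|H].
    + exists (fst z, e/2). split.
      * apply Gl_sector; [exact Hth|]. left; simpl; lra.
      * rewrite Cmod_sub; simpl. rewrite H.
        apply Rle_lt_trans with (sqrt ((e/2)^2)).
        { right. f_equal. ring. }
        rewrite sqrt_pow2 by lra. lra.
    + exists (fst z - e/2, snd z). split.
      * apply Gl_sector; [exact Hth|]. right. unfold Lf in *; simpl.
        assert (sin th < 0) by (apply sin_lt_0; lra). nra.
      * rewrite Cmod_sub; simpl.
        apply Rle_lt_trans with (sqrt ((e/2)^2)).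
        { right. f_equal. ring. }
        rewrite sqrt_pow2 by lra. lra.
  - exists z. split.
    + intro Hs. apply (Cl_not_Gl th z Hc). apply sector_Gl; assumption.
    + rewrite Cmod_sub. replace ((fst z - fst z)^2 + (snd z - snd z)^2) with 0 by ring.
      rewrite sqrt_0. exact He.
Qed.

Lemma glb_prop (E : R -> Prop) (e0 L : R) : E e0 -> (forall e, E e -> L <= e) ->
  L <= real (Glb_Rbar E) /\ (forall e, E e -> real (Glb_Rbar E) <= e).
Proof.
  intros H0 HL. destruct (Glb_Rbar_correct E) as [Hlb Hgl].
  assert (A1 : Rbar_le L (Glb_Rbar E)) by (apply Hgl; intros x Hx; simpl; apply HL; exact Hx).
  assert (A2 : Rbar_le (Glb_Rbar E) e0) by (apply Hlb; exact H0).
  destruct (Glb_Rbar E) as [g| |]; simpl in *; try contradiction.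
  split; [exact A1|]. intros e He. specialize (Hlb e He). simpl in Hlb. exact Hlb.
Qed.

Lemma origin_bd th : PI < th < 2*PI -> boundary (sector th) (0,0).
Proof. intros Hth. apply Cl_bd; [exact Hth| |left; reflexivity]. unfold Cl, Lf; simpl; split; lra. Qed.

Lemma dG_props th x : PI < th < 2*PI ->
  0 <= dG (sector th) x /\ (forall z, boundary (sector th) z -> dG (sector th) x <= Cmod (x - z)).
Proof.
  intros Hth. unfold dG.
  destruct (glb_prop (fun r => exists z, boundary (sector th) z /\ r = Cmod (x - z)) (Cmod (x - (0,0))) 0) as [A B].
  - exists (0,0). split; [apply origin_bd; exact Hth| reflexivity].
  - intros e [z [_ ->]]. apply Cmod_nonneg.
  - split; [exact A|]. intros z Hz. apply B. exists z. split; [exact Hz|reflexivity].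
Qed.

Lemma dG_ge th x L : PI < th < 2*PI -> (forall z, Cl th z -> L <= Cmod (x - z)) -> L <= dG (sector th) x.
Proof.
  intros Hth H. unfold dG.
  destruct (glb_prop (fun r => exists z, boundary (sector th) z /\ r = Cmod (x - z)) (Cmod (x - (0,0))) L) as [A B].
  - exists (0,0). split; [apply origin_bd; exact Hth| reflexivity].
  - intros e [z [Hz ->]]. apply H. apply bd_Cl; assumption.
  - exact A.
Qed.

Lemma seg1 (a b : R) : 0 < a -> b <= 0 ->
  0 < a/(a-b) <= 1 /\ a + a/(a-b) * (b - a) = 0 /\ (forall l, a/(a-b) <= l -> a + l*(b-a) <= 0).
Proof.
  intros Ha Hb. assert (Hd : 0 < a - b) by lra.
  split; [split|split].
  - apply Rdiv_lt_0_compat; lra.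
  - apply (Rmult_le_reg_r (a-b)); [lra|]. unfold Rdiv. rewrite Rmult_assoc, Rinv_l by lra. lra.
  - field. lra.
  - intros l Hl. assert (a/(a-b) * (a-b) <= l * (a - b)) by (apply Rmult_le_compat_r; lra).
    replace (a/(a-b) * (a-b)) with a in H by (field; lra). lra.
Qed.

Lemma segment_bd th (x w : C) : Gl th x -> Cl th w ->
  exists l, 0 <= l <= 1 /\ Cl th (fst x + l * (fst w - fst x), snd x + l * (snd w - snd x)) /\
    (snd x + l * (snd w - snd x) = 0 \/ Lf th (fst x + l * (fst w - fst x), snd x + l * (snd w - snd x)) = 0).
Proof.
  intros Hx [Hw1 Hw2].
  assert (HL : forall l, Lf th (fst x + l * (fst w - fst x), snd x + l * (snd w - snd x)) = Lf th x + l * (Lf th w - Lf th x))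
    by (intros; unfold Lf; simpl; ring).
  destruct (Rlt_le_dec 0 (snd x)) as [H1|H1]; destruct (Rlt_le_dec 0 (Lf th x)) as [H2|H2].
  - destruct (seg1 _ _ H1 Hw1) as [[P1 Q1] [E1 F1]]. destruct (seg1 _ _ H2 Hw2) as [[P2 Q2] [E2 F2]].
    destruct (Rle_lt_dec (snd x / (snd x - snd w)) (Lf th x / (Lf th x - Lf th w))).
    + exists (Lf th x / (Lf th x - Lf th w)). split; [lra|]. unfold Cl; rewrite HL. split; [split|].
      * simpl. apply F1. lra.
      * lra.
      * right. exact E2.
    + exists (snd x / (snd x - snd w)). split; [lra|]. unfold Cl; rewrite HL. split; [split|].
      * simpl. lra.
      * apply F2. lra.
      * left. exact E1.
  - destruct (seg1 _ _ H1 Hw1) as [[P1 Q1] [E1 F1]].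
    exists (snd x / (snd x - snd w)). split; [lra|]. unfold Cl; rewrite HL. split; [split|].
    + simpl. lra.
    + set (l := snd x / (snd x - snd w)) in *.
      assert (0 <= (1-l) * (- Lf th x)) by (apply Rmult_le_pos; lra).
      assert (0 <= l * (- Lf th w)) by (apply Rmult_le_pos; lra). lra.
    + left. exact E1.
  - destruct (seg1 _ _ H2 Hw2) as [[P2 Q2] [E2 F2]].
    exists (Lf th x / (Lf th x - Lf th w)). split; [lra|]. unfold Cl; rewrite HL. split; [split|].
    + simpl. set (l := Lf th x / (Lf th x - Lf th w)) in *.
      assert (0 <= (1-l) * (- snd x)) by (apply Rmult_le_pos; lra).
      assert (0 <= l * (- snd w)) by (apply Rmult_le_pos; lra). lra.
    + lra.
    + right. exact E2.
  - exfalso. destruct Hx; lra.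
Qed.

Lemma dG_le_Cl th x w : PI < th < 2*PI -> Gl th x -> Cl th w -> dG (sector th) x <= Cmod (x - w).
Proof.
  intros Hth Hx Hw. destruct (segment_bd th x w Hx Hw) as [l [Hl [Hc He]]].
  destruct (dG_props th x Hth) as [_ H].
  eapply Rle_trans. { apply H. apply Cl_bd; [exact Hth| exact Hc| exact He]. }
  rewrite !Cmod_sub. cbn [fst snd]. apply sqrt_le_1_alt.
  replace ((fst x - (fst x + l * (fst w - fst x))) ^ 2 + (snd x - (snd x + l * (snd w - snd x))) ^ 2)
    with (l^2 * ((fst x - fst w) ^ 2 + (snd x - snd w) ^ 2)) by ring.
  assert (0 <= (fst x - fst w) ^ 2 + (snd x - snd w) ^ 2) by (pose proof (pow2_ge_0 (fst x - fst w)); pose proof (pow2_ge_0 (snd x - snd w)); lra).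
  assert (l^2 <= 1) by nra.
  set (Q := (fst x - fst w) ^ 2 + (snd x - snd w) ^ 2) in *.
  assert (0 <= (1 - l^2) * Q) by (apply Rmult_le_pos; lra). lra.
Qed.

Lemma case2 (S t : R) : 0 <= S -> 1 <= 2*S*S -> S <= 1 -> 0 <= t <= 1 ->
  1 - 4*t*S*S*(1 - S*S) <= (2*S - t)^2.
Proof. intros. set (ts := 2*S*(1 - S + S*S*S)).
  assert (Hts: 0 <= ts) by (unfold ts; assert (0 <= S*S*S) by (apply Rmult_le_pos; nra); nra).
  assert (Hg: (2*S - t)^2 - (1 - 4*t*S*S*(1 - S*S)) = (t - ts)^2 + (4*S*S - 1 - ts*ts)) by (unfold ts; ring).
  destruct (Rle_lt_dec ts 1).
  - nra.
  - assert (S*S + S >= 1) by nra.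
    assert (g1: (2*S - 1)^2 - (1 - 4*1*S*S*(1 - S*S)) = (2*S*S+2*S-2)*(2*S-2*S*S)) by ring.
    assert ((2*S - t)^2 - (1 - 4*t*S*S*(1 - S*S)) - ((2*S - 1)^2 - (1 - 4*1*S*S*(1 - S*S))) = (t-1)*(t+1-2*ts)) by (unfold ts; ring).
    assert (0 <= (2*S*S+2*S-2)*(2*S-2*S*S)) by (apply Rmult_le_pos; nra).
    assert (0 <= (t-1)*(t+1-2*ts)) by (replace ((t-1)*(t+1-2*ts)) with ((1-t)*(2*ts-t-1)) by ring; apply Rmult_le_pos; lra).
    lra.
Qed.

Lemma gen_quad (a b c t : R) : 0 <= a <= 1 -> 1 <= c -> 0 <= a + b + c -> 0 <= t <= 1 ->
  0 <= a*t^2 + b*t + c.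
Proof.
  intros Ha Hc Habc Ht.
  destruct (Rle_lt_dec 0 b).
  - assert (0 <= a * t^2) by (apply Rmult_le_pos; nra). assert (0 <= b*t) by nra. lra.
  - destruct (Rle_lt_dec (b + 2*a) 0).
    + assert (a*t^2 + b*t + c - (a + b + c) = (1-t)*(-(a*(t+1)+b))) by ring.
      assert (0 <= (1-t)*(-(a*(t+1)+b))) by (apply Rmult_le_pos; nra). lra.
    + assert (Hapos : 0 < a) by lra.
      assert (4*a*(a*t^2 + b*t + c) = (2*a*t + b)^2 + (4*a*c - b^2)) by ring.
      assert (b^2 <= 4*a*a) by nra.
      assert (4*a*a <= 4*a*c) by nra.
      assert (0 <= (2*a*t+b)^2) by apply pow2_ge_0.
      assert (0 <= 4*a*(a*t^2 + b*t + c)) by lra. nra.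
Qed.

Lemma sin_concave (u w : R) : 0 <= u -> 0 <= w ->
  sin (Rmin u (PI/2)) + sin (Rmin w (PI/2)) <= 2 * sin (Rmin ((u+w)/2) (PI/2)).
Proof.
  intros Hu Hw. pose proof PI_RGT_0.
  set (u' := Rmin u (PI/2)). set (w' := Rmin w (PI/2)).
  assert (Hu' : 0 <= u' <= PI/2) by (unfold u', Rmin; destruct (Rle_dec u (PI/2)); lra).
  assert (Hw' : 0 <= w' <= PI/2) by (unfold w', Rmin; destruct (Rle_dec w (PI/2)); lra).
  set (p := (u'+w')/2). set (q := (u'-w')/2).
  assert (E : sin u' + sin w' = 2 * sin p * cos q).
  { replace u' with (p + q) by (unfold p, q; field). replace w' with (p - q) by (unfold p, q; field).
    rewrite sin_plus, sin_minus. ring. }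
  assert (Hsp : 0 <= sin p) by (apply sin_ge_0; unfold p; lra).
  assert (Hcq : cos q <= 1) by apply COS_bound.
  set (m := Rmin ((u+w)/2) (PI/2)).
  assert (Hpm : p <= m).
  { unfold m, p, Rmin. destruct (Rle_dec ((u+w)/2) (PI/2)).
    - unfold u', w', Rmin. destruct (Rle_dec u (PI/2)); destruct (Rle_dec w (PI/2)); lra.
    - lra. }
  assert (Hm : m <= PI/2) by (unfold m, Rmin; destruct (Rle_dec ((u+w)/2) (PI/2)); lra).
  assert (sin p <= sin m) by (apply sin_incr_1; unfold p in *; lra).
  rewrite E. nra.
Qed.

Lemma S_facts (th : R) : PI < th < 2*PI ->
  0 < sin (th/4) <= 1 /\ 0 < cos (th/4) /\ 1 < 2 * sin (th/4) * sin (th/4) /\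
  sin (th/4) ^ 2 + cos (th/4) ^2 = 1.
Proof.
  intros Hth. pose proof PI_RGT_0.
  assert (H1 : 0 < sin (th/4)) by (apply sin_gt_0; lra).
  assert (H2 : sin (th/4) <= 1) by apply SIN_bound.
  assert (H3 : 0 < cos (th/4)) by (apply cos_gt_0; lra).
  assert (H4 : cos (th/2) < 0) by (apply cos_lt_0; lra).
  replace (th/2) with (2*(th/4)) in H4 by field. rewrite cos_2a_sin in H4.
  pose proof (sin2_cos2 (th/4)). unfold Rsqr in *.
  repeat split; try lra.
Qed.

Lemma K1 (th h t : R) : PI < th < 2*PI -> 0 <= h < th/2 -> 0 <= t <= 1 ->
  let F := sin (Rmin (th/2 - h) (PI/2)) in
  0 <= F <= 1 /\ 0 <= 2 * sin (th/4) - t * F /\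
  1 - t * (cos h)^2 <= (2 * sin (th/4) - t * F)^2.
Proof.
  intros Hth Hh Ht F. pose proof PI_RGT_0.
  destruct (S_facts th Hth) as [[HS0 HS1] [HK [HS2 HSK]]].
  set (S := sin (th/4)) in *. set (K := cos (th/4)) in *.
  assert (HF : 0 <= F <= 1).
  { unfold F. split; [apply sin_ge_0; unfold Rmin; destruct (Rle_dec (th/2 - h) (PI/2)); lra| apply SIN_bound]. }
  assert (H2S : 1 < 2 * S) by nra.
  split; [exact HF|]. split; [nra|].
  destruct (Rle_lt_dec (PI/2) (th/2 - h)) as [HA|HB].
  - assert (F1 : F = 1) by (unfold F; rewrite Rmin_right by lra; apply sin_PI2).
    rewrite F1.
    assert (Hc : sin (th/2) <= cos h).
    { replace (sin (th/2)) with (cos (th/2 - PI/2)) by (rewrite cos_minus, cos_PI2, sin_PI2; ring).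
      apply cos_decr_1; lra. }
    assert (Hs2 : sin (th/2) = 2 * S * K) by (unfold S, K; rewrite <- sin_2a; f_equal; field).
    assert (0 <= 2*S*K) by nra.
    assert (4*S*S*(1 - S*S) <= (cos h)^2) by (replace (1 - S*S) with (K*K) by nra; nra).
    pose proof (case2 S t (Rlt_le _ _ HS0) (Rlt_le _ _ HS2) HS1 Ht). nra.
  - assert (F1 : F = sin (th/2 - h)) by (unfold F; rewrite Rmin_left by lra; reflexivity).
    assert (Hsig : 0 <= sin h) by (apply sin_ge_0; lra).
    assert (Hsum : sin h + F <= 2 * S).
    { rewrite F1. set (d := h - th/4).
      replace h with (th/4 + d) by (unfold d; ring).
      replace (th/2 - (th/4 + d)) with (th/4 - d) by field.
      rewrite sin_plus, sin_minus. fold S K.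
      pose proof (COS_bound d). nra. }
    pose proof (sin2_cos2 h) as Hsc. unfold Rsqr in Hsc.
    pose proof (gen_quad (F^2) ((cos h)^2 - 4*S*F) (4*S*S - 1) t) as G.
    assert (0 <= F^2 <= 1) by nra.
    assert (0 <= F^2 + ((cos h)^2 - 4*S*F) + (4*S*S - 1)).
    { replace (F^2 + ((cos h)^2 - 4*S*F) + (4*S*S - 1)) with ((2*S - F - sin h) * (2*S - F + sin h)) by nra.
      apply Rmult_le_pos; lra. }
    assert (0 <= F ^ 2 * t ^ 2 + (cos h ^ 2 - 4 * S * F) * t + (4 * S * S - 1)) by (apply G; lra).
    nra.
Qed.

Lemma Vpolar (th r t1 p t2 M : R) : PI < th < 2*PI -> 0 < r -> 0 < p -> 0 < t1 <= t2 -> t2 < th ->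
  (forall w, Cl th w -> M <= Cmod ((r * cos t1, r * sin t1) - w)) ->
  (forall w, Cl th w -> M <= Cmod ((p * cos t2, p * sin t2) - w)) ->
  Cmod ((r * cos t1, r * sin t1) - (p * cos t2, p * sin t2)) + 2 * M <= 2 * sin (th/4) * (r + p).
Proof.
  intros Hth Hr Hp Ht Ht2 HMx HMy. pose proof PI_RGT_0.
  assert (Hsth : sin th < 0) by (apply sin_lt_0; lra).
  assert (HA : M <= r * sin (Rmin t1 (PI/2))).
  { unfold Rmin. destruct (Rle_dec t1 (PI/2)).
    - assert (Hc : 0 <= cos t1) by (apply cos_ge_0; lra).
      assert (Hs : 0 <= sin t1) by (apply sin_ge_0; lra).
      eapply Rle_trans; [apply (HMx (r * cos t1, 0))|].
      + unfold Cl, Lf; simpl. split; [lra|]. assert (0 <= r * cos t1) by nra. nra.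
      + rewrite Cmod_sub; simpl. right. apply sqrt_eq_of_sq; [nra|]. ring.
    - eapply Rle_trans; [apply (HMx (0, 0))|].
      + unfold Cl, Lf; simpl. split; lra.
      + rewrite Cmod_sub; simpl. rewrite sin_PI2. right. apply sqrt_eq_of_sq; [lra|].
        pose proof (sin2_cos2 t1). unfold Rsqr in *. nra. }
  assert (HB : M <= p * sin (Rmin (th - t2) (PI/2))).
  { unfold Rmin. destruct (Rle_dec (th - t2) (PI/2)).
    - assert (Hc : 0 <= cos (th - t2)) by (apply cos_ge_0; lra).
      assert (Hs : 0 <= sin (th - t2)) by (apply sin_ge_0; lra).
      set (l := p * cos (th - t2)).
      assert (Hl : 0 <= l) by (unfold l; nra).
      eapply Rle_trans; [apply (HMy (l * cos th, l * sin th))|].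
      + unfold Cl, Lf; simpl. split; [nra|]. right; ring.
      + rewrite Cmod_sub; simpl. right. apply sqrt_eq_of_sq; [nra|].
        assert (Ec : cos (th - t2) = cos th * cos t2 + sin th * sin t2) by apply cos_minus.
        pose proof (sin2_cos2 t2) as E1. pose proof (sin2_cos2 th) as E2. pose proof (sin2_cos2 (th - t2)) as E3.
        unfold Rsqr in *.
        transitivity (p^2 * (sin t2 * sin t2 + cos t2 * cos t2) - 2 * p * l * (cos th * cos t2 + sin th * sin t2) + l^2 * (sin th * sin th + cos th * cos th)).
        { ring. }
        rewrite E1, E2, <- Ec. unfold l.
        assert (E4 : sin (th - t2) * sin (th - t2) = 1 - cos (th - t2) * cos (th - t2)) by lra.
        transitivity (p^2 * (sin (th - t2) * sin (th - t2))); [|ring]. rewrite E4. ring.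
    - eapply Rle_trans; [apply (HMy (0, 0))|].
      + unfold Cl, Lf; simpl. split; lra.
      + rewrite Cmod_sub; simpl. rewrite sin_PI2. right. apply sqrt_eq_of_sq; [lra|].
        pose proof (sin2_cos2 t2). unfold Rsqr in *. nra. }
  set (s := r + p). set (P := r * p).
  set (h := (t2 - t1)/2).
  assert (Hh : 0 <= h < th/2) by (unfold h; lra).
  set (t := 4 * P / s^2).
  assert (Hs : 0 < s) by (unfold s; lra).
  assert (Ht01 : 0 <= t <= 1).
  { unfold t. split.
    - apply Rmult_le_pos; [unfold P; nra| left; apply Rinv_0_lt_compat; nra].
    - apply (Rmult_le_reg_r (s^2)); [nra|]. replace (4 * P / s^2 * s^2) with (4*P) by (field; lra).
      unfold P, s. pose proof (pow2_ge_0 (r - p)). nra. }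
  destruct (K1 th h t Hth Hh Ht01) as [HF [Hpos Hmain]].
  set (F := sin (Rmin (th/2 - h) (PI/2))) in *.
  set (S := sin (th/4)) in *.
  assert (HMs : M * s <= 2 * P * F).
  { assert (M * s <= p * (r * sin (Rmin t1 (PI/2))) + r * (p * sin (Rmin (th - t2) (PI/2)))) by (unfold s; nra).
    pose proof (sin_concave t1 (th - t2) ltac:(lra) ltac:(lra)) as Hc.
    replace ((t1 + (th - t2))/2) with (th/2 - h) in Hc by (unfold h; field).
    fold F in Hc. unfold P.
    replace (p * (r * sin (Rmin t1 (PI / 2))) + r * (p * sin (Rmin (th - t2) (PI / 2))))
      with (r * p * (sin (Rmin t1 (PI / 2)) + sin (Rmin (th - t2) (PI / 2)))) in H0 by ring.
    assert (0 <= r * p) by nra. nra. }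
  assert (Hd2 : (Cmod ((r * cos t1, r * sin t1) - (p * cos t2, p * sin t2)))^2 = s^2 - 4 * P * (cos h)^2).
  { rewrite Cmod_sub_sq; cbn [fst snd].
    assert (E : cos (t2 - t1) = 2 * cos h * cos h - 1) by (rewrite <- cos_2a_cos; f_equal; unfold h; field).
    rewrite cos_minus in E. pose proof (sin2_cos2 t1) as E1. pose proof (sin2_cos2 t2) as E2. unfold Rsqr in *.
    transitivity (r^2 * (sin t1 * sin t1 + cos t1 * cos t1) + p^2 * (sin t2 * sin t2 + cos t2 * cos t2)
       - 2 * r * p * (cos t2 * cos t1 + sin t2 * sin t1)); [ring|].
    rewrite E1, E2, E. unfold s, P. ring. }
  assert (Hdist : Cmod ((r * cos t1, r * sin t1) - (p * cos t2, p * sin t2)) <= s * (2 * S - t * F)).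
  { assert (Hu : 0 <= s * (2 * S - t * F)) by nra.
    pose proof (Cmod_nonneg ((r * cos t1, r * sin t1) - (p * cos t2, p * sin t2))) as Hn.
    set (a := Cmod ((r * cos t1, r * sin t1) - (p * cos t2, p * sin t2))) in *.
    cut (a^2 <= (s * (2 * S - t * F))^2). { intro Hc. nra. }
    rewrite Hd2.
    replace (s^2 - 4 * P * (cos h)^2) with (s^2 * (1 - t * (cos h)^2)) by (unfold t; field; lra).
    replace ((s * (2 * S - t * F))^2) with (s^2 * (2 * S - t * F)^2) by ring.
    apply Rmult_le_compat_l; [nra|exact Hmain]. }
  assert (HtF : s * (t * F) = 4 * P * F / s) by (unfold t; field; lra).
  assert (H2M : 2 * M <= 4 * P * F / s).
  { apply (Rmult_le_reg_r s); [exact Hs|]. replace (4 * P * F / s * s) with (4 * P * F) by (field; lra). lra. }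
  unfold s in *. nra.
Qed.

Lemma Cmod_pair_sub (a b : C) : Cmod (a - b) = Cmod ((fst a - fst b, snd a - snd b)).
Proof. rewrite Cmod_sub. unfold Cmod. cbn [fst snd]. f_equal. Qed.

Lemma Cmod_sym (a b : C) : Cmod (a - b) = Cmod (b - a).
Proof. rewrite !Cmod_sub. f_equal. ring. Qed.

Lemma Cmod_polar (r t : R) : 0 < r -> Cmod ((r * cos t, r * sin t)) = r.
Proof. intros Hr. unfold Cmod. cbn [fst snd]. apply sqrt_eq_of_sq; [lra|].
  pose proof (sin2_cos2 t). unfold Rsqr in *.
  transitivity (r^2 * (sin t * sin t + cos t * cos t)); [ring|]. rewrite H. ring. Qed.

Lemma Cmod_tri (x y z : C) : Cmod (x - y) <= Cmod (x - z) + Cmod (z - y).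
Proof.
  replace (x - y)%C with ((x - z) + (z - y))%C.
  - apply Cmod_triangle.
  - destruct x, y, z. unfold Cminus, Cplus, Copp; simpl. f_equal; ring.
Qed.

Lemma core_ineq th x y z M : PI < th < 2*PI -> Gl th x -> Gl th y -> Cl th z ->
  (forall w, Cl th w -> M <= Cmod (x - w)) -> (forall w, Cl th w -> M <= Cmod (y - w)) ->
  Cmod (x - y) + 2 * M <= 2 * sin (th/4) * (Cmod (x - z) + Cmod (z - y)).
Proof.
  intros Hth Hx Hy Hz HMx HMy.
  set (x' := (fst x - fst z, snd x - snd z)). set (y' := (fst y - fst z, snd y - snd z)).
  assert (Hadd : forall a, Cl th a -> Cl th (fst z + fst a, snd z + snd a)).
  { intros a [Ha1 Ha2]. destruct Hz as [Hz1 Hz2]. unfold Cl, Lf in *; cbn [fst snd]. split; nra. }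
  assert (Gx' : Gl th x').
  { destruct (Classical_Prop.classic (Gl th x')) as [G|G]; [exact G|].
    exfalso. apply not_Gl_Cl in G. apply (Cl_not_Gl th x); [|exact Hx].
    pose proof (Hadd _ G) as Hc. unfold x' in Hc; cbn [fst snd] in Hc.
    replace x with (fst z + (fst x - fst z), snd z + (snd x - snd z)); [exact Hc|].
    destruct x; simpl; f_equal; ring. }
  assert (Gy' : Gl th y').
  { destruct (Classical_Prop.classic (Gl th y')) as [G|G]; [exact G|].
    exfalso. apply not_Gl_Cl in G. apply (Cl_not_Gl th y); [|exact Hy].
    pose proof (Hadd _ G) as Hc. unfold y' in Hc; cbn [fst snd] in Hc.
    replace y with (fst z + (fst y - fst z), snd z + (snd y - snd z)); [exact Hc|].
    destruct y; simpl; f_equal; ring. }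
  assert (HMx' : forall w, Cl th w -> M <= Cmod (x' - w)).
  { intros w Hw. eapply Rle_trans; [apply (HMx _ (Hadd w Hw))|]. right.
    rewrite !Cmod_sub. unfold x'. cbn [fst snd]. f_equal. ring. }
  assert (HMy' : forall w, Cl th w -> M <= Cmod (y' - w)).
  { intros w Hw. eapply Rle_trans; [apply (HMy _ (Hadd w Hw))|]. right.
    rewrite !Cmod_sub. unfold y'. cbn [fst snd]. f_equal. ring. }
  assert (E1 : Cmod (x - y) = Cmod (x' - y')) by (rewrite !Cmod_sub; unfold x', y'; cbn [fst snd]; f_equal; ring).
  assert (E2 : Cmod (x - z) = Cmod x') by (rewrite Cmod_pair_sub; reflexivity).
  assert (E3 : Cmod (z - y) = Cmod y') by (rewrite Cmod_sym, Cmod_pair_sub; reflexivity).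
  rewrite E1, E2, E3.
  destruct (Gl_sector th x' Hth Gx') as [r [t1 [Hr [Ht1 Ex]]]].
  destruct (Gl_sector th y' Hth Gy') as [p [t2 [Hp [Ht2 Ey]]]].
  rewrite Ex, Ey in *. rewrite !Cmod_polar by assumption.
  destruct (Rle_lt_dec t1 t2).
  - apply Vpolar; auto; lra.
  - rewrite Cmod_sym. replace (r + p) with (p + r) by ring. apply Vpolar; auto; lra.
Qed.

Theorem theorem3p4 (theta : R) (Htheta : PI < theta < 2 * PI) :
  (forall x y : C, sector theta x -> sector theta y ->
     sG (sector theta) x y <= 2 * sin (theta / 4) * jstar (sector theta) x y)
  /\
  (* sharpness: no smaller constant works *)
  (forall c : R,
     (forall x y : C, sector theta x -> sector theta y ->
        sG (sector theta) x y <= c * jstar (sector theta) x y) ->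
     2 * sin (theta / 4) <= c).
Proof.
  pose proof PI_RGT_0 as HPI.
  destruct (S_facts theta Htheta) as [[HS0 HS1] [HK [HS2 HSK]]].
  split.
  - intros x y Hx Hy.
    apply sector_Gl in Hx; [|exact Htheta]. apply sector_Gl in Hy; [|exact Htheta].
    destruct (dG_props theta x Htheta) as [Hdx0 Hdx].
    destruct (dG_props theta y Htheta) as [Hdy0 Hdy].
    set (m := Rmin (dG (sector theta) x) (dG (sector theta) y)).
    assert (Hm0 : 0 <= m) by (unfold m, Rmin; destruct (Rle_dec _ _); lra).
    set (d := Cmod (x - y)).
    assert (Hd0 : 0 <= d) by apply Cmod_nonneg.
    set (k := 2 * sin (theta / 4)).
    assert (Hk : 0 < k) by (unfold k; lra).
    assert (Hkey : forall z, boundary (sector theta) z -> (d + 2 * m) / k <= Cmod (x - z) + Cmod (z - y)).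
    { intros z Hz. apply bd_Cl in Hz; [|exact Htheta].
      apply (Rmult_le_reg_r k); [exact Hk|]. replace ((d + 2 * m) / k * k) with (d + 2*m) by (field; lra).
      replace ((Cmod (x - z) + Cmod (z - y)) * k) with (k * (Cmod (x - z) + Cmod (z - y))) by ring. unfold d, k. apply core_ineq; auto.
      - intros w Hw. eapply Rle_trans; [|apply (dG_le_Cl theta x w Htheta Hx Hw)]. unfold m; apply Rmin_l.
      - intros w Hw. eapply Rle_trans; [|apply (dG_le_Cl theta y w Htheta Hy Hw)]. unfold m; apply Rmin_r. }
    destruct (glb_prop (fun r => exists z, boundary (sector theta) z /\ r = Cmod (x - z) + Cmod (z - y))
      (Cmod (x - (0,0)) + Cmod ((0,0) - y)) ((d + 2 * m) / k)) as [HI _].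
    { exists (0,0). split; [apply origin_bd; exact Htheta|reflexivity]. }
    { intros e [z [Hz ->]]. apply Hkey; exact Hz. }
    unfold sG, jstar. fold d. fold m. fold k.
    set (I := real (Glb_Rbar (fun r => exists z, boundary (sector theta) z /\ r = Cmod (x - z) + Cmod (z - y)))) in *.
    destruct (Req_dec d 0) as [D0|D0].
    + rewrite D0. unfold Rdiv. rewrite !Rmult_0_l, Rmult_0_r. lra.
    + assert (Hdp : 0 < d) by lra.
      assert (HL : 0 < (d + 2 * m) / k) by (apply Rdiv_lt_0_compat; lra).
      assert (HIp : 0 < I) by lra.
      replace (k * (d / (d + 2 * m))) with (d / ((d + 2 * m) / k)) by (field; lra).
      unfold Rdiv. apply Rmult_le_compat_l; [lra|]. apply Rinv_le_contravar; lra.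
  - intros c Hc.
    set (S := sin (theta / 4)) in *.
    set (x0 := (1 * cos (theta/4), 1 * sin (theta/4))).
    set (y0 := (1 * cos (3*theta/4), 1 * sin (3*theta/4))).
    assert (Hx0 : sector theta x0) by (exists 1, (theta/4); repeat split; lra).
    assert (Hy0 : sector theta y0) by (exists 1, (3*theta/4); repeat split; lra).
    specialize (Hc x0 y0 Hx0 Hy0).
    assert (Hd : Cmod (x0 - y0) = 2 * S).
    { rewrite Cmod_sub. apply sqrt_eq_of_sq; [lra|]. unfold x0, y0; cbn [fst snd].
      assert (Ec : cos (3*theta/4 - theta/4) = cos (3*theta/4) * cos (theta/4) + sin (3*theta/4) * sin (theta/4)) by apply cos_minus.
      replace (3*theta/4 - theta/4) with (2 * (theta/4)) in Ec by field.
      rewrite cos_2a_sin in Ec. fold S in Ec.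
      pose proof (sin2_cos2 (theta/4)) as E1. pose proof (sin2_cos2 (3*theta/4)) as E2. unfold Rsqr in *. fold S in E1.
      transitivity ((sin (3*theta/4) * sin (3*theta/4) + cos (3*theta/4) * cos (3*theta/4)) + (S * S + cos (theta/4) * cos (theta/4))
        - 2 * (cos (3 * theta / 4) * cos (theta / 4) + sin (3 * theta / 4) * S)); [unfold S; ring|].
      rewrite E1, E2, <- Ec. ring. }
    assert (Hdx : S <= dG (sector theta) x0).
    { apply dG_ge; [exact Htheta|]. intros z [Hz1 Hz2].
      pose proof (snd_diff x0 z). pose proof (Rle_abs (snd x0 - snd z)). unfold x0 in *; cbn [fst snd] in *. unfold S. lra. }
    assert (Hdy : S <= dG (sector theta) y0).
    { apply dG_ge; [exact Htheta|]. intros z [Hz1 Hz2].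
      pose proof (Lf_diff theta y0 z). pose proof (Rle_abs (Lf theta y0 - Lf theta z)).
      assert (Ly : Lf theta y0 = S).
      { unfold Lf, y0; cbn [fst snd]. unfold S.
        replace (theta/4) with (theta - 3*theta/4) by field. rewrite sin_minus. ring. }
      lra. }
    set (m := Rmin (dG (sector theta) x0) (dG (sector theta) y0)).
    assert (Hm : S <= m) by (unfold m, Rmin; destruct (Rle_dec _ _); lra).
    assert (Hj : 0 <= jstar (sector theta) x0 y0 <= 1/2).
    { unfold jstar. fold m. rewrite Hd. split.
      - apply Rdiv_le_0_compat; lra.
      - apply (Rmult_le_reg_r (2 * S + 2 * m)); [lra|]. replace (2 * S / (2 * S + 2 * m) * (2 * S + 2 * m)) with (2 * S) by (field; lra). lra. }
    assert (Hs : S <= sG (sector theta) x0 y0).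
    { unfold sG. rewrite Hd.
      destruct (glb_prop (fun r => exists z, boundary (sector theta) z /\ r = Cmod (x0 - z) + Cmod (z - y0))
        (Cmod (x0 - (0,0)) + Cmod ((0,0) - y0)) (Cmod (x0 - y0))) as [HI HI2].
      { exists (0,0). split; [apply origin_bd; exact Htheta|reflexivity]. }
      { intros e [z [Hz ->]]. apply Cmod_tri. }
      set (I := real (Glb_Rbar (fun r => exists z, boundary (sector theta) z /\ r = Cmod (x0 - z) + Cmod (z - y0)))) in *.
      assert (HI3 : I <= 2).
      { eapply Rle_trans; [apply HI2; exists (0,0); split; [apply origin_bd; exact Htheta|reflexivity]|].
        rewrite Cmod_sym. rewrite !Cmod_pair_sub. cbn [fst snd].
        replace (0 - fst x0, 0 - snd x0) with (- 1 * cos (theta/4), -1 * sin (theta/4)) by (unfold x0; cbn [fst snd]; f_equal; ring).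
        replace (0 - fst y0, 0 - snd y0) with (- 1 * cos (3*theta/4), -1 * sin (3*theta/4)) by (unfold y0; cbn [fst snd]; f_equal; ring).
        unfold Cmod; cbn [fst snd].
        pose proof (sin2_cos2 (theta/4)) as E1. pose proof (sin2_cos2 (3*theta/4)) as E2. unfold Rsqr in *.
        replace ((-1 * cos (theta / 4)) ^ 2 + (-1 * sin (theta / 4)) ^ 2) with 1 by (rewrite <- E1; ring).
        replace ((-1 * cos (3 * theta / 4)) ^ 2 + (-1 * sin (3 * theta / 4)) ^ 2) with 1 by (rewrite <- E2; ring).
        rewrite sqrt_1. lra. }
      rewrite Hd in HI.
      apply (Rmult_le_reg_r I); [lra|]. replace (2 * S / I * I) with (2 * S) by (field; lra). nra. }
    destruct (Rle_lt_dec c 0).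
    + assert (c * jstar (sector theta) x0 y0 <= 0) by nra. lra.
    + assert (c * jstar (sector theta) x0 y0 <= c / 2) by nra. lra.
Qed.
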